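(* Let $H$ be a bipartite matching covered graph and $u$ a vertex of $H$ of degree at least three. If $f_1$ and $f_2$ are two edges incident with $u$ that lie in a common 4-cycle of $H$, then at least one of $f_1,f_2$ is removable in $H$.
   Context: Graphs may have multiple edges but no loops. An edge is admissible if it lies in some perfect matching. A connected graph with at least two vertices is matching covered if every edge is admissible. An edge $e$ of a matching covered graph $H$ is removable if $H-e$ is matching covered. *)

(* Defs.v *)
(* A graph is given by a finite vertex type V, a finite type E of edge
   names, endpoint maps ep1 ep2 : E -> V (loopless: ep1 e != ep2 e), and
   an edge set F : {set E}; the graph is (V, F).  Deleting an edge e is
   F :\ e.  Parallel edges are allowed (distinct edge names with the same
   endpoints). *)
From mathcomp Require Import all_boot.
Set Implicit Arguments. Unset Strict Implicit. Unset Printing Implicit Defensive.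

Section Graphs.
Variables (V E : finType) (ep1 ep2 : E -> V).

Definition incident (e : E) (v : V) : bool := (ep1 e == v) || (ep2 e == v).

Definition joins (e : E) (x y : V) : bool :=
  ((ep1 e == x) && (ep2 e == y)) || ((ep1 e == y) && (ep2 e == x)).

Definition deg (F : {set E}) (v : V) : nat := #|[set e in F | incident e v]|.

Definition adj (F : {set E}) : rel V := fun x y => [exists e in F, joins e x y].

Definition connected_graph (F : {set E}) : Prop :=
  forall x y : V, connect (adj F) x y.

Definition perfect_matching (F M : {set E}) : Prop :=
  M \subset F /\ forall v : V, #|[set e in M | incident e v]| = 1.

Definition admissible (F : {set E}) (e : E) : Prop :=
  exists M : {set E}, perfect_matching F M /\ e \in M.

Definition matching_covered (F : {set E}) : Prop :=
  connected_graph F /\ 2 <= #|V| /\ forall e, e \in F -> admissible F e.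

Definition removable (F : {set E}) (e : E) : Prop :=
  e \in F /\ matching_covered (F :\ e).

Definition bipartite (F : {set E}) : Prop :=
  exists A : {set V}, forall e, e \in F -> (ep1 e \in A) != (ep2 e \in A).

Definition in_common_4cycle (F : {set E}) (u : V) (f1 f2 : E) : Prop :=
  exists (a w b : V) (g1 g2 : E),
    [/\ uniq [:: u; a; w; b],
        [&& f1 \in F, g1 \in F, g2 \in F & f2 \in F],
        joins f1 u a, joins g1 a w & joins g2 w b /\ joins f2 b u].

End Graphs.

(* Main.v *)
Require Import Defs.
From mathcomp Require Import all_boot.
From mathcomp Require Import zify.
Set Implicit Arguments. Unset Strict Implicit. Unset Printing Implicit Defensive.
Section Hall.
Variables (V : finType) (r : rel V).
Definition NB (B S : {set V}) := [set y in B | [exists x in S, r x y]].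

Lemma NB_sub (B S : {set V}) : NB B S \subset B.
Proof. by apply/subsetP=> y; rewrite inE => /andP[]. Qed.

Lemma NBP (B S : {set V}) y : reflect (y \in B /\ exists2 x, x \in S & r x y) (y \in NB B S).
Proof.
rewrite inE; apply: (iffP andP) => [[yB /existsP[x /andP[xS rxy]]]|[yB [x xS rxy]]].
  by split=> //; exists x.
by split=> //; apply/existsP; exists x; rewrite xS.
Qed.

Lemma card_leU (A1 A2 : {set V}) : #|A1 :|: A2| <= #|A1| + #|A2|.
Proof. have := cardsUI A1 A2; lia. Qed.

Lemma hall n : forall A B : {set V}, #|A| <= n ->
  (forall S : {set V}, S \subset A -> #|S| <= #|NB B S|) ->
  exists g : V -> V, {in A, forall x, g x \in B /\ r x (g x)} /\ {in A &, injective g}.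
Proof.
elim: n => [|n IH] A B hA hH.
  move: hA; rewrite leqn0 cards_eq0 => /eqP ->.
  by exists id; split=> x; rewrite inE.
case: (set_0Vmem A) => [->|[x xA]].
  by exists id; split=> x; rewrite inE.
case: (boolP [exists S : {set V}, [&& S \subset A, S != set0, S != A & #|NB B S| <= #|S|]]).
  move=> /existsP[S /and4P[SA S0 SA' tight]].
  have SpA : S \proper A by rewrite properEneq SA' SA.
  have [g1 [g1P g1I]] : exists g : V -> V, {in S, forall x, g x \in B /\ r x (g x)} /\ {in S &, injective g}.
    apply: IH => [|S' S'S]; last by apply: hH; apply: subset_trans SA.
    by have := proper_card SpA; lia.
  have [g2 [g2P g2I]] : exists g : V -> V, {in A :\: S, forall x, g x \in B :\: NB B S /\ r x (g x)} /\ {in A :\: S &, injective g}.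
    apply: IH => [|S' S'S].
      have [s sS] := set0Pn _ S0.
      have : A :\: S \proper A.
        apply/properP; split; first exact: subsetDl.
        by exists s; [apply: (subsetP SA) | rewrite inE sS].
      by move/proper_card; lia.
    have dis : S :&: S' = set0.
      apply/setP=> v; rewrite !inE; apply/negP=> /andP[vS vS'].
      by move: (subsetP S'S v vS'); rewrite inE vS.
    have SS'A : S :|: S' \subset A.
      by rewrite subUset SA (subset_trans S'S) // subsetDl.
    have h1 := hH _ SS'A.
    have h2 := cardsUI S S'; rewrite dis cards0 in h2.
    have h3 : NB B (S :|: S') \subset NB B S :|: NB (B :\: NB B S) S'.
      apply/subsetP=> y /NBP[yB [v]]; rewrite inE => /orP[vS|vS'] rvy; rewrite inE.
        by apply/orP; left; apply/NBP; split=> //; exists v.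
      case: (boolP (y \in NB B S)) => //= yN.
      by apply/NBP; split; [rewrite inE yN | exists v].
    have h4 := subset_leq_card h3.
    have h5 := card_leU (NB B S) (NB (B :\: NB B S) S').
    lia.
  exists (fun v => if v \in S then g1 v else g2 v); split.
    move=> v vA; case: ifP => vS; first exact: g1P.
    have vAS : v \in A :\: S by rewrite inE vS.
    by have [] := g2P v vAS; rewrite inE => /andP[_ ->].
  move=> v1 v2 v1A v2A /=.
  have nin : forall v v', v \in S -> v' \in A -> v' \notin S -> g1 v <> g2 v'.
    move=> v v' vS v'A v'S eq.
    have v'AS : v' \in A :\: S by rewrite inE v'S.
    have [] := g2P v' v'AS; rewrite inE -eq => /andP[/negP nN _] _.
    apply: nN; apply/NBP; have [gB grv] := g1P v vS; split=> //; by exists v.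
  case: ifP => v1S; case: ifP => v2S.
  - exact: g1I.
  - by move=> eq; case: (nin v1 v2 v1S v2A (negbT v2S)).
  - by move=> eq; case: (nin v2 v1 v2S v1A (negbT v1S)).
  - by apply: g2I; rewrite inE ?v1S ?v2S.
rewrite negb_exists => /forallP nt.
have x1 : [set x] \subset A by rewrite sub1set.
have := hH _ x1; rewrite cards1 card_gt0 => /set0Pn[y /NBP[yB [x' ]]].
rewrite inE => /eqP -> rxy.
have [g2 [g2P g2I]] : exists g : V -> V, {in A :\ x, forall x, g x \in B :\ y /\ r x (g x)} /\ {in A :\ x &, injective g}.
  apply: IH => [|S' S'S].
    have : A :\ x \proper A by apply/properP; split; [exact: subsetDl | exists x; rewrite // !inE eqxx].
    by move/proper_card; lia.
  case: (set_0Vmem S') => [->|[s sS']]; first by rewrite cards0.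
  have S'A : S' \subset A by apply: subset_trans S'S (subsetDl _ _).
  have S'nA : S' != A.
    apply/eqP=> eq; move: S'S; rewrite eq => /subsetP/(_ x xA); by rewrite !inE eqxx.
  have S'n0 : S' != set0 by apply/set0Pn; exists s.
  have := nt S'; rewrite S'A S'n0 S'nA /= -ltnNge => lt.
  have h3 : NB B S' \subset NB (B :\ y) S' :|: [set y].
    apply/subsetP=> z /NBP[zB [v vS' rvz]]; rewrite in_setU in_set1.
    case: (z =P y) => [->|/eqP zy]; first by rewrite orbT.
    apply/orP; left; apply/NBP; split; first by rewrite !inE zy.
    by exists v.
  have h4 := subset_leq_card h3.
  have h5 := card_leU (NB (B :\ y) S') [set y]; rewrite cards1 in h5.
  lia.
exists (fun v => if v == x then y else g2 v); split.
  move=> v vA; case: eqP => [->|/eqP vx]; first by [].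
  have vAx : v \in A :\ x by rewrite !inE vx.
  by have [] := g2P v vAx; rewrite !inE => /andP[_ ->].
move=> v1 v2 v1A v2A /=.
have nin : forall v, v \in A -> v != x -> y <> g2 v.
  move=> v vA vx eq; have vAx : v \in A :\ x by rewrite !inE vx.
  by have [] := g2P v vAx; rewrite !inE -eq eqxx.
case: eqP => [->|/eqP v1x]; case: eqP => [->|/eqP v2x] //.
- by move=> eq; case: (nin v2 v2A v2x).
- by move=> eq; case: (nin v1 v1A v1x).
- by apply: g2I; rewrite !inE ?v1x ?v2x.
Qed.
End Hall.
Lemma arith1 nT1 nT2 t1 t2 tU nU nUU n12 t12 :
  nT1 <= t1 + 1 -> nT2 <= t2 + 1 -> tU < nU -> nU <= nUU ->
  nUU + n12 = nT1 + nT2 -> tU + t12 = t1 + t2 -> n12 <= t12 + 1.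
Proof. lia. Qed.

Section G.
Variables (V E : finType) (ep1 ep2 : E -> V).
Hypothesis loopless : forall e : E, ep1 e != ep2 e.

Local Notation joins := (joins ep1 ep2).
Local Notation incident := (incident ep1 ep2).
Local Notation adj := (adj ep1 ep2).
Local Notation perfect_matching := (perfect_matching ep1 ep2).

Definition oth (e : E) (v : V) := if ep1 e == v then ep2 e else ep1 e.

Lemma joinsC e x y : joins e x y = joins e y x.
Proof. by rewrite /Defs.joins orbC. Qed.

Lemma joins_oth e x y : joins e x y -> oth e x = y.
Proof.
have := loopless e.
rewrite /Defs.joins /oth => ne /orP[/andP[/eqP-> /eqP->]|/andP[/eqP e1 /eqP e2]];
  first by rewrite eqxx.
by rewrite -e2 (negbTE ne).
Qed.

Lemma inc_joins e v : incident e v -> joins e v (oth e v).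
Proof.
rewrite /Defs.incident /Defs.joins /oth => /orP[/eqP->|/eqP<-]; first by rewrite !eqxx.
by rewrite (negbTE (loopless e)) !eqxx orbT.
Qed.

Lemma joins_inc e x y : joins e x y -> incident e x && incident e y.
Proof.
by rewrite /Defs.joins /Defs.incident => /orP[]/andP[->->]; rewrite ?orbT.
Qed.

Lemma inc_joins_eq e x y v : joins e x y -> incident e v -> v = x \/ v = y.
Proof.
rewrite /Defs.joins /Defs.incident => /orP[]/andP[/eqP-> /eqP->]/orP[]/eqP->; auto.
Qed.

Lemma adj_sym (F : {set E}) : symmetric (adj F).
Proof.
move=> x y; apply/existsP/existsP=> [][e /andP[eF j]]; exists e; by rewrite eF joinsC.
Qed.

Lemma adjP (F : {set E}) x y : reflect (exists2 e, e \in F & joins e x y) (adj F x y).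
Proof.
apply: (iffP existsP) => [[e /andP[eF j]]|[e eF j]]; first by exists e.
by exists e; rewrite eF.
Qed.

Lemma bip_joins (X : {set V}) (F : {set E}) e x y :
  (forall e, e \in F -> (ep1 e \in X) != (ep2 e \in X)) -> e \in F -> joins e x y ->
  (y \in X) = ~~ (x \in X).
Proof.
move=> bX /bX; rewrite /Defs.joins => h /orP[]/andP[/eqP ex /eqP ey]; move: h;
  rewrite -ex -ey; by case: (ep1 e \in X); case: (ep2 e \in X).
Qed.

Section PM.
Variables (F M : {set E}).
Hypothesis pmM : perfect_matching F M.

Lemma pm_uniq e e' v : e \in M -> incident e v -> e' \in M -> incident e' v -> e = e'.
Proof.
case: pmM => _ /(_ v) /eqP/cards1P[e0 h] eM ev e'M e'v.
have : e \in [set e0] by rewrite -h inE eM ev.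
have : e' \in [set e0] by rewrite -h inE e'M e'v.
by rewrite !inE => /eqP-> /eqP->.
Qed.

Lemma pm_ex v : exists e, e \in M /\ incident e v.
Proof.
case: pmM => _ /(_ v) /eqP/cards1P[e0 h].
have : e0 \in [set e0] by rewrite inE.
by rewrite -h inE => /andP[]; exists e0.
Qed.

Definition part v := odflt v (omap (fun e => oth e v) [pick e in M | incident e v]).

Lemma partP v e : e \in M -> incident e v -> part v = oth e v.
Proof.
move=> eM ev; rewrite /part; case: pickP => [e' /andP[e'M e'v]|/(_ e)]; last by rewrite eM ev.
by rewrite (pm_uniq e'M e'v eM ev).
Qed.

Lemma part_edge v : exists e, [/\ e \in M, e \in F & joins e v (part v)].
Proof.
have [e [eM ev]] := pm_ex v; exists e; split => //.
  by case: pmM => /subsetP MF _; apply: MF.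
by rewrite (partP eM ev); apply: inc_joins.
Qed.

Lemma part_inv v : part (part v) = v.
Proof.
have [e [eM _ j]] := part_edge v.
have /andP[_ pv] := joins_inc j.
rewrite (partP eM pv); apply: joins_oth; by rewrite joinsC.
Qed.

Lemma part_inj : injective part.
Proof. exact: (can_inj part_inv). Qed.

End PM.

Lemma card_bip (X : {set V}) (F M : {set E}) :
  (forall e, e \in F -> (ep1 e \in X) != (ep2 e \in X)) -> perfect_matching F M ->
  #|X| = #|~: X|.
Proof.
move=> bX pm.
have pX : forall v, (part M v \in X) = ~~ (v \in X).
  move=> v; have [e [_ eF j]] := part_edge pm v; exact: bip_joins bX eF j.
have h1 : part M @: X \subset ~: X.
  by apply/subsetP=> y /imsetP[x xX ->]; rewrite inE pX xX.
have h2 : part M @: (~: X) \subset X.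
  by apply/subsetP=> y /imsetP[x xX ->]; rewrite pX; rewrite inE in xX.
have := subset_leq_card h1; have := subset_leq_card h2.
rewrite !card_imset; try exact: part_inj pm.
move=> a b; apply/eqP; rewrite eqn_leq; by rewrite a b.
Qed.

Lemma joins_neq e x y : joins e x y -> x != y.
Proof.
have := loopless e.
by rewrite /Defs.joins => ne /orP[]/andP[/eqP<- /eqP<-]; rewrite // eq_sym.
Qed.

Lemma joins_eq2 e x y z : joins e x y -> joins e x z -> y = z.
Proof. by move=> /joins_oth <- /joins_oth <-. Qed.

Definition bipc (X : {set V}) (F : {set E}) :=
  forall e, e \in F -> (ep1 e \in X) != (ep2 e \in X).

Definition NN (F : {set E}) (S : {set V}) := NB (adj F) setT S.

Lemma NNP (F : {set E}) (S : {set V}) y : reflect (exists2 x, x \in S & adj F x y) (y \in NN F S).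
Proof.
apply: (iffP (NBP _ _ _ _)) => [[_ h]|h] //; by split; rewrite ?inE.
Qed.

Lemma NNX (X : {set V}) (F : {set E}) (S : {set V}) y : bipc X F -> S \subset X ->
  y \in NN F S -> y \notin X.
Proof.
move=> bX SX /NNP[x xS /adjP[e eF j]].
by rewrite (bip_joins bX eF j) (subsetP SX x xS).
Qed.

Lemma mcHall (X : {set V}) (F : {set E}) (S : {set V}) :
  bipc X F -> matching_covered ep1 ep2 F -> S \subset X -> S != set0 -> S != X ->
  #|S| < #|NN F S|.
Proof.
move=> bX [conn [_ adm]] SX S0 SnX.
have [s sS] := set0Pn _ S0.
have [z zX zS] : exists2 z, z \in X & z \notin S.
  have : S \proper X by rewrite properEneq SnX SX.
  by case/properP=> _ [z zX zS]; exists z.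
set C := S :|: NN F S.
have [c [d [cC dC cd]]] : exists c d, [/\ c \in C, d \notin C & adj F c d].
  case: (boolP [exists c, [exists d, [&& c \in C, d \notin C & adj F c d]]]).
    by move/existsP=> [c /existsP[d /and3P[h1 h2 h3]]]; exists c, d.
  rewrite negb_exists => /forallP h.
  have cl : closed (adj F) C.
    apply: (intro_closed (sym_connect_sym (adj_sym F))) => x y xy xC.
    move: (h x); rewrite negb_exists => /forallP/(_ y).
    by rewrite xC xy andbT negbK.
  have := closed_connect cl (conn s z).
  rewrite !in_setU sS /= (negbTE zS) /= => /esym zN.
  by move: (NNX bX SX zN); rewrite zX.
have cS : c \notin S.
  apply/negP=> cS; move: dC; rewrite in_setU negb_or => /andP[_ /negP]; apply.
  by apply/NNP; exists c.
have cN : c \in NN F S by move: cC; rewrite in_setU (negbTE cS).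
have [e0 e0F j0] := adjP _ _ _ cd.
have [M [pm e0M]] := adm e0 e0F.
have pc : part M c = d.
  have /andP[ic _] := joins_inc j0.
  by rewrite (partP pm e0M ic); apply: joins_oth.
have sub : part M @: S \subset NN F S.
  apply/subsetP=> y /imsetP[x xS ->].
  have [e [_ eF j]] := part_edge pm x.
  by apply/NNP; exists x => //; apply/adjP; exists e.
have cardS : #|part M @: S| = #|S| by rewrite card_imset //; exact: part_inj pm.
rewrite ltn_neqAle -!cardS subset_leq_card // andbT.
apply/negP=> /eqP eqc.
have := subset_cardP eqc sub => /(_ c); rewrite cN => /imsetP[x xS ecx].
move: dC; rewrite -pc ecx (part_inv pm) inE xS.
by [].
Qed.

Lemma pm_build (X : {set V}) (F0 : {set E}) (g : V -> V) (pe : V -> E) :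
  (forall v, v \in X -> pe v \in F0 /\ joins (pe v) v (g v)) -> {in X &, injective g} ->
  (forall v, v \in X -> g v \notin X) -> #|X| = #|~: X| ->
  perfect_matching F0 (pe @: X).
Proof.
move=> peP gI gX cX; split.
  by apply/subsetP=> e /imsetP[x xX ->]; case: (peP x xX).
move=> v; apply/eqP/cards1P.
case: (boolP (v \in X)) => vX.
  exists (pe v); apply/setP=> e; rewrite !inE; apply/andP/eqP => [[/imsetP[x xX ->] inc]|->].
    have [_ j] := peP x xX.
    case: (inc_joins_eq j inc) => [->//|ev].
    by move: (gX x xX); rewrite -ev vX.
  have [_ j] := peP v vX; have /andP[i _] := joins_inc j.
  by rewrite imset_f.
have sub : g @: X \subset ~: X.
  by apply/subsetP=> y /imsetP[x xX ->]; rewrite inE gX.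
have ce : #|g @: X| = #|~: X| by rewrite card_in_imset.
have := subset_cardP ce sub v; rewrite inE vX => /imsetP[x0 x0X ->].
exists (pe x0); apply/setP=> e; rewrite !inE; apply/andP/eqP => [[/imsetP[x xX ->] inc]|->].
  have [_ j] := peP x xX.
  case: (inc_joins_eq j inc) => [ev|ev].
    by move: (gX x0 x0X); rewrite ev xX.
  by rewrite (gI _ _ xX x0X (esym ev)).
have [_ j] := peP x0 x0X; have /andP[_ i] := joins_inc j.
by rewrite imset_f.
Qed.

Lemma rem_crit (X : {set V}) (F : {set E}) f u a :
  bipc X F -> matching_covered ep1 ep2 F -> u \in X -> f \in F -> joins f u a ->
  connect (adj (F :\ f)) u a ->
  (forall T : {set V}, T \subset X -> u \in T -> a \notin NN (F :\ f) T ->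
     #|T| < #|NN (F :\ f) T|) ->
  removable ep1 ep2 F f.
Proof.
move=> bX mc uX fF jf cua H0; split => //.
have mc' := mc; case: mc' => [conn [V2 adm]].
have aX : a \notin X by rewrite (bip_joins bX fF jf) uX.
split; [|split=> //].
  move=> x y; apply: connect_sub (conn x y) => x' y' /adjP[e eF j].
  case: (e =P f) => [ef|/eqP nef]; last first.
    by apply: connect1; apply/adjP; exists e; rewrite // !inE nef.
  subst e.
  have nxy := joins_neq j.
  have /andP[ix iy] := joins_inc j.
  case: (inc_joins_eq jf ix) => ex; case: (inc_joins_eq jf iy) => ey; subst x' y';
    rewrite ?eqxx in nxy => //.
  by rewrite (sym_connect_sym (adj_sym _)).
move=> e; rewrite !inE => /andP[nef eF].
have [M0 [pm0 _]] := adm f fF.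
have cX := card_bip bX pm0.
have [x [y [xX yX jxy]]] : exists x y, [/\ x \in X, y \notin X & joins e x y].
  have := bX e eF; case: (boolP (ep1 e \in X)) => h1 /= h2.
    exists (ep1 e), (ep2 e); split => //; last by rewrite /Defs.joins !eqxx.
  exists (ep2 e), (ep1 e); split => //; last by rewrite /Defs.joins !eqxx orbT.
  by move: h2; rewrite negbK.
set F' := F :\ f.
have HS : forall S : {set V}, S \subset X :\ x -> #|S| <= #|NB (adj F') (~: X :\ y) S|.
  move=> S SXx.
  case: (set_0Vmem S) => [->|[s sS]]; first by rewrite cards0.
  have SX : S \subset X by apply: subset_trans SXx (subsetDl _ _).
  have lt : #|S| < #|NN F' S|.
    case: (boolP ((u \in S) && (a \notin NN F' S))) => [/andP[uS aN]|hh].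
      exact: H0.
    have S0 : S != set0 by apply/set0Pn; exists s.
    have SnX : S != X.
      by apply/eqP=> eq; move: SXx; rewrite eq => /subsetP/(_ x xX); rewrite !inE eqxx.
    have := mcHall bX mc SX S0 SnX => lt.
    apply: (leq_trans lt); apply: subset_leq_card.
    apply/subsetP=> z /NNP[t tS /adjP[e' e'F j']].
    case: (e' =P f) => [ef|/eqP nef']; last first.
      by apply/NNP; exists t => //; apply/adjP; exists e'; rewrite // !inE nef'.
    subst e'.
    have /andP[it _] := joins_inc j'.
    case: (inc_joins_eq jf it) => et; last by move: (subsetP SX t tS); rewrite et (negbTE aX).
    subst t.
    have -> : z = a by apply: (joins_eq2 j' jf).
    by move: hh; rewrite tS /= negbK.
  have sub : NN F' S :\ y \subset NB (adj F') (~: X :\ y) S.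
    apply/subsetP=> z; rewrite !in_setD1 => /andP[zy zN].
    have /NNP[t tS tz] := zN.
    apply/NBP; split; last by exists t.
    by rewrite !inE zy (NNX _ SX zN) //; move=> e' /setD1P[_ e'F]; exact: bX.
  apply: leq_trans (subset_leq_card sub).
  move: lt; rewrite (cardsD1 y (NN F' S)) => lt.
  rewrite -ltnS; apply: leq_trans lt _.
  by case: (y \in NN F' S); rewrite ?add1n ?add0n.
have [g [gP gI]] := hall (r := adj F') (n := #|X :\ x|) (B := ~: X :\ y) (leqnn _) HS.
pose g' v := if v == x then y else g v.
pose pe v := if v == x then e else odflt e [pick e' in F' | joins e' v (g v)].
have pmb : perfect_matching F' (pe @: X).
  apply: (pm_build (g := g')).
  - move=> v vX; rewrite /pe /g'; case: eqP => [->|/eqP vx].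
      by rewrite !inE nef eF.
    have vXx : v \in X :\ x by rewrite !inE vx.
    have [_ /adjP[e' e'F j']] := gP v vXx.
    case: pickP => [e'' /andP[]|/(_ e')]; first by [].
    by rewrite e'F j'.
  - have nin : forall v, v \in X -> v != x -> y <> g v.
      move=> v vX vx eq; have vXx : v \in X :\ x by rewrite !inE vx.
      by have [] := gP v vXx; rewrite !inE -eq eqxx.
    move=> v1 v2 v1X v2X; rewrite /g'.
    case: eqP => [->|/eqP v1x]; case: eqP => [->|/eqP v2x] //.
    + by move=> eq; case: (nin v2 v2X v2x).
    + by move=> eq; case: (nin v1 v1X v1x).
    + by apply: gI; rewrite !inE ?v1x ?v2x.
  - move=> v vX; rewrite /g'; case: eqP => // /eqP vx.
    have vXx : v \in X :\ x by rewrite !inE vx.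
    by have [] := gP v vXx; rewrite !inE => /andP[_ ->].
  - exact: cX.
exists (pe @: X); split => //.
have -> : e = pe x by rewrite /pe eqxx.
exact: imset_f.
Qed.

Lemma main_sec (F : {set E}) u f1 f2 :
  bipartite ep1 ep2 F -> matching_covered ep1 ep2 F -> 3 <= deg ep1 ep2 F u ->
  in_common_4cycle ep1 ep2 F u f1 f2 ->
  removable ep1 ep2 F f1 \/ removable ep1 ep2 F f2.
Proof.
move=> [X0 bX0] mc deg3 [a [w [b [g1 [g2 [uq /and4P[f1F g1F g2F f2F] j1 jg1 [jg2 j2]]]]]]].
have [X [bX uX]] : exists X, bipc X F /\ u \in X.
  case: (boolP (u \in X0)) => uX0; first by exists X0.
  exists (~: X0); split; last by rewrite inE.
  by move=> e eF; rewrite !inE; have := bX0 e eF; case: (_ \in X0); case: (_ \in X0).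
move: uq; rewrite /= !inE !negb_or => /and4P[/and3P[ua uw ub] /andP[aw ab] wb _].
have adjI : forall (F' : {set E}) e x y, e \in F' -> joins e x y -> adj F' x y.
  by move=> F' e x y eF j; apply/adjP; exists e.
have aX : a \notin X by rewrite (bip_joins bX f1F j1) uX.
have wX : w \in X by rewrite (bip_joins bX g1F jg1) (negbTE aX).
have bXn : b \notin X by move: (bip_joins bX f2F j2); rewrite uX; case: (b \in X).
have j2' : joins f2 u b by rewrite joinsC.
have g1f1 : g1 != f1.
  apply/eqP=> e; subst g1; move: uw; rewrite (joins_eq2 jg1 (_ : joins f1 a u)) ?eqxx //.
  by rewrite joinsC.
have g2f1 : g2 != f1.
  apply/eqP=> e; subst g2; have /andP[iw _] := joins_inc jg2.
  by case: (inc_joins_eq j1 iw) => ew; [move: uw | move: aw]; rewrite ew eqxx.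
have f2f1 : f2 != f1.
  by apply/eqP=> e; subst f2; move: ab; rewrite (joins_eq2 j1 j2') eqxx.
have g1f2 : g1 != f2.
  apply/eqP=> e; subst g1; have /andP[ia _] := joins_inc jg1.
  by case: (inc_joins_eq j2' ia) => ea; [move: ua | move: ab]; rewrite ea eqxx.
have g2f2 : g2 != f2.
  apply/eqP=> e; subst g2; move: uw; rewrite (joins_eq2 (_ : joins f2 b w) j2) ?eqxx //.
  by rewrite joinsC.
set D := [set e in F | incident e u].
have [h hD] : exists h, h \in D :\ f2 :\ f1.
  apply/set0Pn; rewrite -card_gt0.
  have e1 := cardsD1 f1 D; have e2 := cardsD1 f2 (D :\ f1).
  have -> : D :\ f2 :\ f1 = D :\ f1 :\ f2.
    by apply/setP=> z; rewrite !inE; case: (z == f1); case: (z == f2).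
  move: deg3 e1 e2; rewrite /deg -/D.
  move: #|D| #|D :\ f1| #|D :\ f1 :\ f2| (f1 \in D) (f2 \in D :\ f1) => n1 n2 n3 b1 b2.
  by move=> h e1 e2; rewrite e1 e2 in h; clear e1 e2; move: h; case: b1; case: b2; case: n3.
move: hD; rewrite !inE => /andP[hf1 /andP[hf2 /andP[hF ih]]].
set c := oth h u; have jh : joins h u c := inc_joins ih.
set F1 := F :\ f1; set F2 := F :\ f2.
have inF1 : forall e, e \in F -> e != f1 -> e \in F1 by move=> e eF ne; rewrite !inE ne eF.
have inF2 : forall e, e \in F -> e != f2 -> e \in F2 by move=> e eF ne; rewrite !inE ne eF.
have cj : forall (F' : {set E}) e x y, e \in F' -> joins e y x -> connect (adj F') x y.
  by move=> F' e x y eF j; apply: connect1; apply: adjI eF _; rewrite joinsC.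
have path1 : connect (adj F1) u a.
  apply: connect_trans (cj _ f2 _ _ (inF1 _ f2F f2f1) j2) _.
  apply: connect_trans (cj _ g2 _ _ (inF1 _ g2F g2f1) jg2) _.
  exact: (cj _ g1 _ _ (inF1 _ g1F g1f1) jg1).
have path2 : connect (adj F2) u b.
  have f1f2 : f1 != f2 by rewrite eq_sym.
  have j1' : joins f1 a u by rewrite joinsC.
  have jg1' : joins g1 w a by rewrite joinsC.
  have jg2' : joins g2 b w by rewrite joinsC.
  apply: connect_trans (cj _ f1 u a (inF2 _ f1F f1f2) j1') _.
  apply: connect_trans (cj _ g1 a w (inF2 _ g1F g1f2) jg1') _.
  exact: (cj _ g2 w b (inF2 _ g2F g2f2) jg2').
case: (boolP [exists T : {set V}, [&& T \subset X, u \in T, a \notin NN F1 T & #|NN F1 T| <= #|T|]])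
  => [/existsP[T1 /and4P[T1X uT1 aT1 cT1]]|nex1]; last first.
  left; apply: (rem_crit bX mc uX f1F j1 path1) => T TX uT aT.
  by move: nex1; rewrite negb_exists => /forallP/(_ T); rewrite TX uT aT /= -ltnNge.
case: (boolP [exists T : {set V}, [&& T \subset X, u \in T, b \notin NN F2 T & #|NN F2 T| <= #|T|]])
  => [/existsP[T2 /and4P[T2X uT2 bT2 cT2]]|nex2]; last first.
  right; apply: (rem_crit bX mc uX f2F j2' path2) => T TX uT bT.
  by move: nex2; rewrite negb_exists => /forallP/(_ T); rewrite TX uT bT /= -ltnNge.
exfalso.
have wT1 : w \notin T1.
  apply/negP=> wT; apply: (negP aT1); apply/NNP; exists w => //.
  by apply: adjI (inF1 _ g1F g1f1) _; rewrite joinsC.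
have wT2 : w \notin T2.
  apply/negP=> wT; apply: (negP bT2); apply/NNP; exists w => //.
  exact: adjI (inF2 _ g2F g2f2) jg2.
have sub1 : NN F T1 \subset NN F1 T1 :|: [set a].
  apply/subsetP => y /NNP[t tT /adjP[e eF j]]; rewrite in_setU in_set1.
  case: (e =P f1) => [ef|/eqP ne].
    subst e; have /andP[it _] := joins_inc j.
    case: (inc_joins_eq j1 it) => et.
      by subst t; rewrite (joins_eq2 j j1) eqxx orbT.
    by move: (subsetP T1X t tT); rewrite et (negbTE aX).
  by apply/orP; left; apply/NNP; exists t => //; exact: adjI (inF1 _ eF ne) j.
have sub2 : NN F T2 \subset NN F2 T2 :|: [set b].
  apply/subsetP => y /NNP[t tT /adjP[e eF j]]; rewrite in_setU in_set1.
  case: (e =P f2) => [ef|/eqP ne].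
    subst e; have /andP[it _] := joins_inc j.
    case: (inc_joins_eq j2' it) => et.
      by subst t; rewrite (joins_eq2 j j2') eqxx orbT.
    by move: (subsetP T2X t tT); rewrite et (negbTE bXn).
  by apply/orP; left; apply/NNP; exists t => //; exact: adjI (inF2 _ eF ne) j.
have c1 : #|NN F T1| <= #|T1| + 1.
  apply: leq_trans (subset_leq_card sub1) _.
  apply: leq_trans (card_leU _ _) _; rewrite cards1 leq_add2r; exact: cT1.
have c2 : #|NN F T2| <= #|T2| + 1.
  apply: leq_trans (subset_leq_card sub2) _.
  apply: leq_trans (card_leU _ _) _; rewrite cards1 leq_add2r; exact: cT2.
have UX : T1 :|: T2 \subset X by rewrite subUset T1X T2X.
have U0 : T1 :|: T2 != set0 by apply/set0Pn; exists u; rewrite inE uT1.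
have UnX : T1 :|: T2 != X.
  by apply/eqP=> eq; move: wX; rewrite -eq inE (negbTE wT1) (negbTE wT2).
have cU := mcHall bX mc UX U0 UnX.
have subU : NN F (T1 :|: T2) \subset NN F T1 :|: NN F T2.
  apply/subsetP => y /NNP[t]; rewrite in_setU => /orP[tT|tT] ty; rewrite in_setU.
    by apply/orP; left; apply/NNP; exists t.
  by apply/orP; right; apply/NNP; exists t.
have c12 := arith1 c1 c2 cU (subset_leq_card subU) (cardsUI _ _) (cardsUI _ _).
have inN : forall y e, e \in F -> joins e u y -> y \in NN F T1 :&: NN F T2.
  by move=> y e eF j; rewrite in_setI; apply/andP; split; apply/NNP; exists u => //;
    apply: adjI eF j.
have ca : c != a.
  apply/eqP=> ec; apply: (negP aT1); rewrite -ec; apply/NNP; exists u => //.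
  exact: adjI (inF1 _ hF hf1) jh.
have cb : c != b.
  apply/eqP=> ec; apply: (negP bT2); rewrite -ec; apply/NNP; exists u => //.
  exact: adjI (inF2 _ hF hf2) jh.
set R := (T1 :&: T2) :\ u.
have cR : #|T1 :&: T2| = #|R| + 1.
  by rewrite (cardsD1 u (T1 :&: T2)) in_setI uT1 uT2 addnC.
case: (set_0Vmem R) => [R0|[r rR]].
  have s3 : a |: (b |: [set c]) \subset NN F T1 :&: NN F T2.
    apply/subsetP=> y; rewrite !in_setU1 in_set1 => /or3P[]/eqP->.
    - exact: inN _ _ f1F j1.
    - exact: inN _ _ f2F j2'.
    - exact: inN _ _ hF jh.
  have := subset_leq_card s3.
  rewrite !cardsU1 cards1 !inE negb_or ab (eq_sym a c) (eq_sym b c) ca cb.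
  by move=> h3; have := leq_trans h3 c12; rewrite cR R0 cards0.
have RX : R \subset X.
  by apply: subset_trans T1X; apply/subsetP=> z; rewrite !inE => /and3P[].
have Rn0 : R != set0 by apply/set0Pn; exists r.
have RnX : R != X.
  by apply/eqP=> eq; move: wX; rewrite -eq !inE (negbTE wT1) andbF.
have cRN := mcHall bX mc RX Rn0 RnX.
have NR : forall y, y \in NN F R -> [/\ y != a, y != b & y \in NN F T1 :&: NN F T2].
  move=> y /NNP[t /setD1P[tu /setIP[tT1 tT2]] /adjP[e eF j]].
  have tX : t \in X := subsetP T1X t tT1.
  have ne1 : e != f1.
    apply/eqP=> ee; subst e; have /andP[it _] := joins_inc j.
    by case: (inc_joins_eq j1 it) => et; [move: tu | move: tX]; rewrite et ?eqxx ?(negbTE aX).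
  have ne2 : e != f2.
    apply/eqP=> ee; subst e; have /andP[it _] := joins_inc j.
    by case: (inc_joins_eq j2' it) => et; [move: tu | move: tX]; rewrite et ?eqxx ?(negbTE bXn).
  split.
  - apply/eqP=> ya; apply: (negP aT1); rewrite -ya; apply/NNP; exists t => //.
    exact: adjI (inF1 _ eF ne1) j.
  - apply/eqP=> yb; apply: (negP bT2); rewrite -yb; apply/NNP; exists t => //.
    exact: adjI (inF2 _ eF ne2) j.
  - by rewrite in_setI; apply/andP; split; apply/NNP; exists t => //; apply: adjI eF j.
have sK : a |: (b |: NN F R) \subset NN F T1 :&: NN F T2.
  apply/subsetP=> y; rewrite !in_setU1 => /orP[/eqP->|/orP[/eqP->|yR]].
  - by apply: (inN _ _ f1F j1).
  - by apply: (inN _ _ f2F j2').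
  - by case: (NR y yR).
have := subset_leq_card sK.
have aN : a \notin NN F R by apply/negP=> /NR[]; rewrite eqxx.
have bN : b \notin NN F R by apply/negP=> /NR[]; rewrite eqxx.
rewrite !cardsU1 in_setU1 negb_or ab aN bN.
move: c12 cRN; rewrite cR; move: #|NN F R| #|R| #|NN F T1 :&: NN F T2| => x1 x2 x3.
move=> p1 q1 r1; move: r1; rewrite /= => r1; clear -p1 q1 r1; lia.
Qed.


End G.

Unset Implicit Arguments.

Theorem mainTheorem4 (V E : finType) (ep1 ep2 : E -> V)
  (loopless : forall e : E, ep1 e != ep2 e)
  (F : {set E}) (u : V) (f1 f2 : E) :
  bipartite ep1 ep2 F ->
  matching_covered ep1 ep2 F ->
  3 <= deg ep1 ep2 F u ->
  in_common_4cycle ep1 ep2 F u f1 f2 ->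
  removable ep1 ep2 F f1 \/ removable ep1 ep2 F f2.
Proof. exact: (@main_sec V E ep1 ep2 loopless F u f1 f2). Qed.
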